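(* Under Friends Appreciation, consider instances with $n$ agents in which every agent has at least one friend. Let $\textsf{WeaklyConn}$ be the algorithm that returns the partition of $\mathcal{N}$ whose coalitions are the vertex sets of the weakly connected components of the friendship graph $G^f$. Then for every such instance $\mathcal{I}$, $\mathrm{opt}(\mathcal{I})/\mathsf{ESW}(\textsf{WeaklyConn}(\mathcal{I}))\le 2-\frac{6}{n+3}$ if $f_{\min}\ge 2$, and $\le \frac{n}{2}$ in general (i.e. when $f_{\min}=1$).
   Context: A friends-and-enemies instance consists of a set of agents $\mathcal{N}=\{1,\dots,n\}$ and, for each agent $i$, a set of friends $F_i\subseteq \mathcal{N}\setminus\{i\}$; the enemies of $i$ are $E_i=\mathcal{N}\setminus(F_i\cup\{i\})$. An outcome is a partition $\pi$ of $\mathcal{N}$. Under Friends Appreciation, $u_i(C)=|C\cap F_i|-\frac{1}{n}|C\cap E_i|$ for a coalition $C\ni i$, $u_i(\pi)$ is $i$'s utility for her coalition in $\pi$, $\mathsf{ESW}(\pi)=\min_i u_i(\pi)$, and $\mathrm{opt}$ is the maximum of $\mathsf{ESW}$ over all partitions. The friendship graph $G^f$ is the directed graph on $\mathcal{N}$ with an arc $(i,j)$ iff $j\in F_i$. $f_{\min}=\min_i |F_i|$. *)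

(* Defs.v *)
From HB Require Import structures.
From mathcomp Require Import all_boot all_order all_algebra.
Set Implicit Arguments. Unset Strict Implicit. Unset Printing Implicit Defensive.
Import Order.TTheory GRing.Theory Num.Theory.
Local Open Scope ring_scope.

(* Agents are 'I_n; F i is the set of friends of agent i (i \notin F i). *)
Section FE.
Variable n : nat.
Variable F : 'I_n -> {set 'I_n}.

Definition enemies (i : 'I_n) : {set 'I_n} := ~: (F i :|: [set i]).

Definition uFA (i : 'I_n) (C : {set 'I_n}) : rat :=
  (#|C :&: F i|)%:R - (#|C :&: enemies i|)%:R / n%:R.

Definition uP (P : {set {set 'I_n}}) (i : 'I_n) : rat := uFA i (pblock P i).

(* egalitarian social welfare: minimum utility over all agents.
   The neutral element n%:R is a strict upper bound on every utility,
   so it never affects the minimum when n >= 1. *)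
Definition ESW (P : {set {set 'I_n}}) : rat :=
  \big[Num.min/(n%:R : rat)]_(i : 'I_n) uP P i.

Definition is_partition (P : {set {set 'I_n}}) : bool := partition P [set: 'I_n].

(* optimum ESW over all partitions of N (the singleton partition has ESW 0,
   so 0 is a valid neutral element for the maximum) *)
Definition opt : rat :=
  \big[Num.max/0]_(P : {set {set 'I_n}} | is_partition P) ESW P.

Definition fr_sym : rel 'I_n := fun i j => (j \in F i) || (i \in F j).

Definition WeaklyConn : {set {set 'I_n}} :=
  equivalence_partition (connect fr_sym) [set: 'I_n].

Definition valid_instance : Prop := forall i : 'I_n, i \notin F i.
End FE.

(* Main.v *)
Require Import Defs.
From HB Require Import structures.
From mathcomp Require Import all_boot all_order all_algebra.
From mathcomp Require Import ring lra zify.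
Import Order.TTheory GRing.Theory Num.Theory.
Local Open Scope ring_scope.

Section S.
Variable n : nat.
Variable F : 'I_n -> {set 'I_n}.

Lemma F_sub_WC i : F i \subset pblock (WeaklyConn F) i.
Proof.
apply/subsetP => j Hj.
have eqR : {in [set: 'I_n] & &, equivalence_rel (connect (fr_sym F))}.
  move=> x y z _ _ _; split; first exact: connect0.
  move=> Hxy; apply/idP/idP => H.
    apply: connect_trans H; rewrite sym_connect_sym //.
    by move=> a b; rewrite /fr_sym orbC.
  exact: connect_trans Hxy H.
rewrite /WeaklyConn pblock_equivalence_partition ?inE //.
by apply: connect1; rewrite /fr_sym Hj.
Qed.

Lemma card_en i : i \notin F i -> (#|enemies F i| + #|F i| + 1 = n)%N.
Proof.
move=> Hi; have := cardsC (F i :|: [set i]).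
rewrite /enemies; set k := #|~: _|.
rewrite card_ord setUC cardsU1 Hi; lia.
Qed.

Lemma uWC_lb i : i \notin F i -> (0 < n)%N ->
  (#|F i|)%:R - (n%:R - 1 - (#|F i|)%:R) / n%:R <= uP F (WeaklyConn F) i.
Proof.
move=> Hi n0; rewrite /uP /uFA.
rewrite (setIidPr (F_sub_WC i)).
have hle : (#|pblock (WeaklyConn F) i :&: enemies F i| <= #|enemies F i|)%N.
  by apply: subset_leq_card; apply: subsetIr.
have he := card_en i Hi.
have : (#|pblock (WeaklyConn F) i :&: enemies F i|%:R <= (n%:R - 1 - (#|F i|)%:R) :> rat).
  have hn : (n%:R : rat) = (#|enemies F i|)%:R + (#|F i|)%:R + 1.
    by rewrite -[1]/(1%:R) -!natrD he.
  rewrite -(ler_nat rat) in hle; rewrite hn; lra.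
move: (#|pblock _ _ :&: _|%:R) => x hx.
rewrite lerD2l lerN2 ler_pM2r //; last by rewrite invr_gt0 ltr0n.
Qed.

Lemma ESW_le P i : ESW F P <= uP F P i.
Proof.
by rewrite /ESW (bigD1 i) //= ge_min lexx.
Qed.

Lemma uP_le P i : uP F P i <= (#|F i|)%:R.
Proof.
rewrite /uP /uFA.
have h1 : (#|pblock P i :&: F i| <= #|F i|)%N by apply/subset_leq_card/subsetIr.
have h2 : (0 : rat) <= (#|pblock P i :&: enemies F i|)%:R / n%:R.
  by apply: divr_ge0; apply: ler0n.
rewrite -(ler_nat rat) in h1; lra.
Qed.

Lemma opt_le i : opt F <= (#|F i|)%:R.
Proof.
rewrite /opt; apply: (big_ind (fun y => y <= (#|F i|)%:R)) => //.
- by move=> x y hx hy; rewrite ge_max hx hy.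
- move=> P _; exact: le_trans (ESW_le P i) (uP_le P i).
Qed.

Lemma k_le i : i \notin F i -> ((#|F i|)%:R + 1 <= (n%:R : rat)).
Proof.
move=> Hi; have he := card_en i Hi.
have hn : (n%:R : rat) = (#|enemies F i|)%:R + (#|F i|)%:R + 1.
  by rewrite -[1]/(1%:R) -!natrD he.
rewrite hn; have : (0:rat) <= (#|enemies F i|)%:R by apply: ler0n.
lra.
Qed.

Lemma generic (B : rat) : (0 < n)%N -> (forall i, i \notin F i) ->
  (forall i, 1 <= (#|F i|)%:R :> rat) -> 0 <= B ->
  (forall i : 'I_n, opt F <= B * ((#|F i|)%:R - (n%:R - 1 - (#|F i|)%:R) / n%:R)) ->
  opt F <= B * n%:R ->
  opt F / ESW F (WeaklyConn F) <= B.
Proof.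
move=> n0 Hv Hk B0 Hi Hn.
have N0 : (0 : rat) < n%:R by rewrite ltr0n.
have pos : 0 < ESW F (WeaklyConn F).
  rewrite /ESW; apply: (big_ind (fun y => 0 < y)) => //.
    by move=> x y hx hy; rewrite lt_min hx hy.
  move=> i _; apply: (lt_le_trans _ (uWC_lb i (Hv i) n0)).
  have h1 := Hk i; have h2 := k_le i (Hv i).
  move: (#|F i|%:R) h1 h2 => k h1 h2.
  have : (n%:R - 1 - k) / n%:R < 1.
    by rewrite ltr_pdivrMr // mul1r; lra.
  lra.
rewrite ler_pdivrMr //.
rewrite /ESW; apply: (big_ind (fun y => opt F <= B * y)) => //.
  move=> x y hx hy; have [h|h] := leP x y.
    by [].
  by [].
move=> i _; apply: le_trans (Hi i) _.
by apply: ler_wpM2l => //; apply: uWC_lb.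
Qed.

End S.

Theorem theorem5 (n : nat) (F : 'I_n -> {set 'I_n}) :
  (forall i : 'I_n, i \notin F i) ->
  (forall i : 'I_n, 0 < #|F i|)%N ->
  ((forall i : 'I_n, 2 <= #|F i|)%N ->
     opt F / ESW F (WeaklyConn F) <= 2 - 6 / (n%:R + 3))
  /\ opt F / ESW F (WeaklyConn F) <= n%:R / 2.
Proof.
move=> Hv H1.
case: (posnP n) => [n0|n0].
  have -> : ESW F (WeaklyConn F) = 0.
    by rewrite /ESW; subst n; rewrite big_ord0.
  rewrite invr0 mulr0; split; [move=> _|]; rewrite n0.
    have -> : (6 : rat) / (0%:R + 3) = 2 by rewrite add0r; field.
    by rewrite subrr.
  by rewrite mul0r.
have N0 : (0 : rat) < n%:R by rewrite ltr0n.
have Hk : forall i, 1 <= (#|F i|)%:R :> rat by move=> i; rewrite ler1n.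
have optk := opt_le n F.
have kle i := k_le n F i (Hv i).
split.
- move=> H2; apply: generic => //.
  + have N3 : (0 : rat) < n%:R + 3 by lra.
    rewrite subr_ge0 ler_pdivrMr //; lra.
  + move=> i; apply: le_trans (optk i) _.
    have h2 : 2 <= (#|F i|)%:R :> rat by rewrite ler_nat.
    have h3 := kle i.
    move: (#|F i|%:R) h2 h3 => k h2 h3.
    set N := (n%:R : rat) in N0 h3 *.
    have N3 : 0 < N + 3 by lra.
    have -> : (2 - 6 / (N + 3)) * (k - (N - 1 - k) / N)
       = 2 * ((N + 1) * k - N + 1) / (N + 3).
      by field; apply/andP; split; rewrite gt_eqF // ?lt0r.
    rewrite ler_pdivlMr //; nra.
  + have h3 := kle (Ordinal n0); apply: le_trans (optk (Ordinal n0)) _.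
    move: (#|F (Ordinal n0)|%:R) h3 => k h3.
    set N := (n%:R : rat) in N0 h3 *.
    have N3 : 0 < N + 3 by lra.
    have -> : (2 - 6 / (N + 3)) * N = 2 * N * N / (N + 3).
      by field; rewrite gt_eqF.
    rewrite ler_pdivlMr //; nra.
- apply: generic => //.
  + by apply: divr_ge0; apply: ler0n.
  + move=> i; apply: le_trans (optk i) _.
    have h2 := Hk i; have h3 := kle i.
    move: (#|F i|%:R) h2 h3 => k h2 h3.
    set N := (n%:R : rat) in N0 h3 *.
    have -> : N / 2 * (k - (N - 1 - k) / N) = (N * k - N + 1 + k) / 2.
      by field; rewrite gt_eqF.
    rewrite ler_pdivlMr //; nra.
  + have h3 := kle (Ordinal n0); apply: le_trans (optk (Ordinal n0)) _.
    move: (#|F (Ordinal n0)|%:R) h3 => k h3.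
    set N := (n%:R : rat) in N0 h3 *.
    rewrite mulrC mulrA ler_pdivlMr //; nra.
Qed.
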